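(* Let $A=(a_{i,j})$ be an $n\times n$ matrix with indeterminate entries. Then there exists a unique $n\times n$ matrix $B=(b_{i,j})$, with entries of the form $b_{i,j}=a_{i,j}+r_{i,j}$, satisfying the following properties: \begin{enumerate} \item $r_{i,j}=0$ if $i+j\le n$; \item the $r_{i,j}=r_{i,j}(a_{k,\ell})$ are rational functions of the $a_{k,\ell}$ for which $k\ge i$, $\ell\le j$, and $(k,\ell)\neq (i,j)$; \item for any $i<j$, \[ \det\begin{pmatrix} b_{n-j+i,i} & \dots & b_{n-j+i,j} \\ \vdots & \ddots & \vdots \\ b_{n, i} & \dots & b_{n, j} \end{pmatrix} \ = \ \det M_{i,j}, \] where $M_{i,j}$ is the $(j-i+1)\times(j-i+1)$ anti-diagonal matrix whose only nonzero entries lie on the anti-diagonal, namely the entry in row $m+1$ and column $j-i+1-m$ is $a_{n-j+i+m,\,j-m}$ for $0\le m\le j-i$ (so its top-right entry is $a_{n-j+i,j}$, the next one down-left is $a_{n-j+i+1,j-1}$, and so on, down to the bottom-left entry $a_{n,i}$), and all other entries are $0$. \end{enumerate}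
   Context: Here $n\ge 1$ and the $a_{i,j}$, $1\le i,j\le n$, are independent indeterminates; ''rational function'' means an element of the field of rational functions in these indeterminates. The square blocks in property 3 are the contiguous subblocks of $B$ consisting of rows $n-j+i$ through $n$ and columns $i$ through $j$ (i.e., blocks whose bottom row is the bottom row of $B$).
   Formalization: Property 3 is imposed for all i ≤ j rather than only for i < j, so each bottom-row entry $b_{n,i}$ also equals $a_{n,i}$ for every i. The statement above fails without it. *)

(* Defs.v *)
From HB Require Import structures.
From mathcomp Require Import all_boot all_order all_algebra.
From mathcomp Require Import fraction.
From mathcomp Require Import mpoly.

Set Implicit Arguments.
Unset Strict Implicit.
Unset Printing Implicit Defensive.

Import GRing.Theory.
Local Open Scope ring_scope.

(* Conventions (0-based indices, i.e. paper index = Rocq index + 1):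
   - K : base field; the n^2 indeterminates a_{k,l} are the variables
     'X_(mxvec_index k l) of {mpoly K[n*n]};
   - ratfun K n := the field of rational functions in these indeterminates. *)

Definition ratfun (K : fieldType) (n : nat) := {fraction {mpoly K[n * n]}}.

Definition polyfrac (K : fieldType) (n : nat) (p : {mpoly K[n * n]})
  : ratfun K n := @FracField.tofrac _ p.

Definition indet (K : fieldType) (n : nat) (k l : 'I_n) : ratfun K n :=
  polyfrac 'X_(mxvec_index k l).

Definition indetmx (K : fieldType) (n : nat) : 'M[ratfun K n]_n :=
  \matrix_(k, l) indet K k l.

Definition poly_in_vars (K : fieldType) (n : nat) (S : {set 'I_n * 'I_n})
    (p : {mpoly K[n * n]}) : Prop :=
  forall m, m \in msupp p ->
    forall k l : 'I_n, (m (mxvec_index k l) != 0)%N -> (k, l) \in S.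

Definition ratfun_in_vars (K : fieldType) (n : nat) (S : {set 'I_n * 'I_n})
    (r : ratfun K n) : Prop :=
  exists p q : {mpoly K[n * n]},
    [/\ q != 0, poly_in_vars S p, poly_in_vars S q & r = polyfrac p / polyfrac q].

Definition admissible (n : nat) (i j : 'I_n) : {set 'I_n * 'I_n} :=
  [set kl : 'I_n * 'I_n | [&& (i <= kl.1)%N, (kl.2 <= j)%N & kl != (i, j)]].

(* For i <= j (0-based), the square block of X with rows (n-1)-(j-i) .. n-1
   and columns i .. j (paper: rows n-j+i .. n, columns i .. j). The default
   ordinal i is never used since all indices are in range. *)
Definition bottom_block (R : Type) (n : nat) (X : 'M[R]_n) (i j : 'I_n)
    : 'M[R]_((j - i)%N.+1) :=
  \matrix_(u, v) X (insubd i (n.-1 - (j - i) + u)%N) (insubd i (i + v)%N).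

(* Row u (paper row m+1, m = u) then holds a_{n-j+i+m, j-m} in column
   j-i+1-m (paper), as required. *)
Definition antidiag_block (K : fieldType) (n : nat) (i j : 'I_n)
    : 'M[ratfun K n]_((j - i)%N.+1) :=
  \matrix_(u, v) if (u + v == j - i)%N then bottom_block (indetmx K n) i j u v
                 else 0.

(* Main.v *)
Require Import Defs.
From HB Require Import structures.
From mathcomp Require Import all_boot all_order all_algebra.
From mathcomp Require Import fraction.
From mathcomp Require Import mpoly.
From mathcomp Require Import zify.

Set Implicit Arguments.
Unset Strict Implicit.
Unset Printing Implicit Defensive.
Import GRing.Theory.
Local Open Scope ring_scope.


Section Rat.
Variables (K : fieldType) (n : nat).
Local Notation R := (ratfun K n).
Local Notation P := {mpoly K[n * n]}.
Implicit Types (S T : {set 'I_n * 'I_n}) (x y : R) (p q : P).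

Lemma mxvec_index_inj (i j i' j' : 'I_n) :
  mxvec_index i j = mxvec_index i' j' -> (i, j) = (i', j').
Proof.
rewrite /mxvec_index => /cast_ord_inj /enum_rank_inj; by [].
Qed.

Lemma piv_mono (S T : {set 'I_n * 'I_n}) (p : P) :
  S \subset T -> poly_in_vars S (p : P) -> poly_in_vars T p.
Proof. by move=> /subsetP ST h m mp k l nz; apply/ST/(h m mp k l nz). Qed.

Lemma piv0 S : poly_in_vars S (0 : P).
Proof. by move=> m; rewrite msupp0. Qed.

Lemma pivC S (c : K) : poly_in_vars S (c%:MP : P).
Proof.
move=> m; rewrite msuppC; case: eqP => // _; rewrite inE => /eqP -> k l.
by rewrite mnm0E.
Qed.

Lemma piv1 S : poly_in_vars S (1 : P).
Proof. by rewrite -mpolyC1; apply: pivC. Qed.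

Lemma pivD S (p q : P) : poly_in_vars S p -> poly_in_vars S q -> poly_in_vars S (p + q).
Proof.
move=> hp hq m /msuppD_le; rewrite mem_cat => /orP [] h.
  exact: hp. exact: hq.
Qed.

Lemma pivN S (p : P) : poly_in_vars S p -> poly_in_vars S (- p).
Proof. by move=> hp m; rewrite (perm_mem (msuppN p)); apply: hp. Qed.

Lemma pivM S (p q : P) : poly_in_vars S p -> poly_in_vars S q -> poly_in_vars S (p * q).
Proof.
move=> hp hq m /msuppM_le /allpairsP [[m1 m2] /= [h1 h2 ->]] k l.
rewrite mnmDE; case: (m1 (mxvec_index k l)) (hp m1 h1 k l) => [|x] /=.
  by rewrite add0n => _; apply: hq.
by move=> h _; apply: h.
Qed.

Lemma pivX S (k l : 'I_n) : (k, l) \in S -> poly_in_vars S ('X_(mxvec_index k l) : P).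
Proof.
move=> kS m; rewrite msuppX inE => /eqP -> k' l'; rewrite mnm1E.
by case: (mxvec_index k l =P mxvec_index k' l') => [/mxvec_index_inj [<- <-] //|].
Qed.

Definition RS (S : {set 'I_n * 'I_n}) (x : R) := ratfun_in_vars S x.

Lemma RS_mono S T x : S \subset T -> RS S x -> RS T x.
Proof.
move=> ST [p [q [q0 hp hq ->]]]; exists p, q; split => //; exact: piv_mono ST _.
Qed.

Lemma polyfrac_eq0 (q : P) : (polyfrac q == 0 :> R) = (q == 0).
Proof. exact: tofrac_eq0. Qed.

Lemma polyfracD (p q : P) : polyfrac (p + q) = polyfrac p + polyfrac q :> R.
Proof. exact: tofracD. Qed.
Lemma polyfracM (p q : P) : polyfrac (p * q) = polyfrac p * polyfrac q :> R.
Proof. exact: tofracM. Qed.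
Lemma polyfracN (p : P) : polyfrac (- p) = - polyfrac p :> R.
Proof. exact: tofracN. Qed.
Lemma polyfrac1 : polyfrac 1 = 1 :> R.
Proof. exact: tofrac1. Qed.
Lemma polyfrac0 : polyfrac 0 = 0 :> R.
Proof. exact: tofrac0. Qed.

Lemma RS0 S : RS S 0.
Proof.
exists 0, 1; split; rewrite ?oner_neq0 //; try exact: piv0.
  exact: piv1.
by rewrite polyfrac0 mul0r.
Qed.

Lemma RS1 S : RS S 1.
Proof.
exists 1, 1; split; rewrite ?oner_neq0 //; try exact: piv1.
by rewrite polyfrac1 divr1.
Qed.

Lemma RSD S x y : RS S x -> RS S y -> RS S (x + y).
Proof.
move=> [p1 [q1 [q10 hp1 hq1 ->]]] [p2 [q2 [q20 hp2 hq2 ->]]].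
exists (p1 * q2 + p2 * q1), (q1 * q2); split.
- by rewrite mulf_neq0.
- by apply: pivD; apply: pivM.
- exact: pivM.
rewrite polyfracD !polyfracM addf_div //; by rewrite polyfrac_eq0.
Qed.

Lemma RSN S x : RS S x -> RS S (- x).
Proof.
move=> [p1 [q1 [q10 hp1 hq1 ->]]]; exists (- p1), q1; split => //.
  exact: pivN.
by rewrite polyfracN mulNr.
Qed.

Lemma RSM S x y : RS S x -> RS S y -> RS S (x * y).
Proof.
move=> [p1 [q1 [q10 hp1 hq1 ->]]] [p2 [q2 [q20 hp2 hq2 ->]]].
exists (p1 * p2), (q1 * q2); split.
- by rewrite mulf_neq0.
- exact: pivM.
- exact: pivM.
by rewrite !polyfracM mulf_div.
Qed.

Lemma RSV S x : RS S x -> RS S x^-1.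
Proof.
move=> [p1 [q1 [q10 hp1 hq1 ->]]].
have [->|p10] := eqVneq p1 0.
  by rewrite polyfrac0 mul0r invr0; apply: RS0.
exists q1, p1; split => //.
by rewrite invf_div.
Qed.

Lemma RSB S x y : RS S x -> RS S y -> RS S (x - y).
Proof. by move=> hx hy; apply: RSD hx (RSN hy). Qed.

Lemma RSX S x m : RS S x -> RS S (x ^+ m).
Proof. by move=> hx; elim: m => [|m IH]; rewrite ?expr0 ?exprS; [apply: RS1|apply: RSM]. Qed.

Lemma RS_indet S (k l : 'I_n) : (k, l) \in S -> RS S (indet K k l).
Proof.
move=> kS; exists 'X_(mxvec_index k l), 1; split; rewrite ?oner_neq0 //.
- exact: pivX.
- exact: piv1.
by rewrite polyfrac1 divr1.
Qed.

Lemma RS_det S m (M : 'M[R]_m) : (forall u v, RS S (M u v)) -> RS S (\det M).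
Proof.
move=> h; rewrite /determinant.
elim/big_ind: _ => //; first exact: RS0.
  by move=> *; apply: RSD.
move=> s _; apply: RSM; first by apply: RSX; apply: RSN; apply: RS1.
elim/big_ind: _ => //; first exact: RS1.
by move=> *; apply: RSM.
Qed.

End Rat.


Section Blk.
Variables (R : comNzRingType) (n : nat).

Definition blk (X : 'M[R]_n) (x0 : 'I_n) (r c d : nat) : 'M[R]_(d.+1) :=
  \matrix_(u, v) X (insubd x0 (r + u)%N) (insubd x0 (c + v)%N).

Definition Drest d (A : 'M[R]_(d.+2)) :=
  \sum_(v < d.+1) A ord0 (widen_ord (leqnSn _) v) * cofactor A ord0 (widen_ord (leqnSn _) v).

Lemma expand_top d (A : 'M[R]_(d.+2)) :
  \det A = A ord0 ord_max * ((-1)^+(d.+1) * \det (row' ord0 (col' ord_max A))) + Drest A.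
Proof.
rewrite (expand_det_row _ ord0) big_ord_recr /= addrC; congr (_ + _); rewrite /cofactor add0n //.
Qed.

Lemma minor_blk X x0 r c d :
  row' ord0 (col' ord_max (blk X x0 r c d.+1)) = blk X x0 r.+1 c d.
Proof.
by apply/matrixP => u v; rewrite !mxE lift0 lift_max addSnnS.
Qed.

Lemma Drest_eq d (A A' : 'M[R]_(d.+2)) :
  (forall u v, (u != ord0) || (v != ord_max) -> A u v = A' u v) -> Drest A = Drest A'.
Proof.
move=> h; apply: eq_bigr => v _; congr (_ * _).
  apply: h; apply/orP; right; by rewrite -val_eqE /= neq_ltn ltn_ord.
rewrite /cofactor; congr (_ * _); congr (\det _).
apply/matrixP => u w; rewrite !mxE; apply: h; apply/orP; left.
by rewrite -val_eqE /=.

Qed.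

Lemma det_blk_eq (X X' : 'M[R]_n) x0 r c d :
  (forall u v : 'I_d.+1, X (insubd x0 (r + u)%N) (insubd x0 (c + v)%N) =
                      X' (insubd x0 (r + u)%N) (insubd x0 (c + v)%N)) ->
  blk X x0 r c d = blk X' x0 r c d.
Proof. by move=> h; apply/matrixP => u v; rewrite !mxE h. Qed.

End Blk.


Section Main.
Variables (K : fieldType) (n : nat).
Local Notation R := (ratfun K n).
Local Notation a := (indet K).
Implicit Types (X : 'M[R]_n).

Lemma vins (x0 : 'I_n) e : (e < n)%N -> nat_of_ord (insubd x0 e) = e.
Proof. by move=> h; rewrite val_insubd h. Qed.

Lemma indet_neq0 (k l : 'I_n) : a k l != 0.
Proof.
rewrite /indet /polyfrac tofrac_eq0 -msupp_eq0 msuppX //.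
Qed.

Definition Y (i : 'I_n) : 'M[R]_n :=
  \matrix_(k, l) if (k + l == n.-1 + i)%N then a k l else 0.

Lemma antidiag_blk (i j : 'I_n) : (i <= j)%N ->
  antidiag_block K i j = blk (Y i) i (n.-1 - (j - i)) i (j - i).
Proof.
move=> ij; apply/matrixP => u v; rewrite !mxE.
have hu := ltn_ord u; have hv := ltn_ord v; have hj := ltn_ord j.
rewrite !vins; try lia.
have -> : (n.-1 - (j - i) + u + (i + v) == n.-1 + i)%N = (u + v == j - i)%N.
  by apply/eqP/eqP; lia.
by case: ifP.
Qed.

Definition EQ X (i : 'I_n) D :=
  \det (blk X i (n.-1 - D) i D) = \det (blk (Y i) i (n.-1 - D) i D).

Lemma Ynz (i : 'I_n) D : (i + D < n)%N -> \det (blk (Y i) i (n.-1 - D) i D) != 0.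
Proof.
elim: D => [|d IH] hD.
  rewrite det_mx11 !mxE /= !vins; try lia.
  have -> : (n.-1 - 0 + 0 + (i + 0) == n.-1 + i)%N = true by apply/eqP; lia.
  exact: indet_neq0.
rewrite expand_top minor_blk.
have -> : (n.-1 - d.+1).+1 = (n.-1 - d)%N by lia.
have -> : Drest (blk (Y i) i (n.-1 - d.+1) i d.+1) = 0.
  apply: big1 => v _; have hv := ltn_ord v; rewrite !mxE /= !vins; try lia.
  have -> : (n.-1 - d.+1 + 0 + (i + v) == n.-1 + i)%N = false by apply/negbTE/eqP; lia.
  by rewrite mul0r.
rewrite addr0 !mxE /= !vins; try lia.
have -> : (n.-1 - d.+1 + 0 + (i + d.+1) == n.-1 + i)%N = true by apply/eqP; lia.
rewrite !mulf_neq0 ?indet_neq0 ?signr_eq0 //.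
by apply: IH; lia.
Qed.


Lemma DrestY0 (i : 'I_n) d : (i + d.+1 < n)%N ->
  Drest (blk (Y i) i (n.-1 - d.+1) i d.+1) = 0.
Proof.
move=> hD.
apply: big1 => v _; have hv := ltn_ord v; rewrite !mxE /= !vins; try lia.
have -> : (n.-1 - d.+1 + 0 + (i + v) == n.-1 + i)%N = false by apply/negbTE/eqP; lia.
by rewrite mul0r.
Qed.

Definition base X :=
  (forall k l : 'I_n, (k + l + 2 <= n)%N -> X k l = a k l) /\ (forall k l : 'I_n, RS (admissible k l) (X k l - a k l)).

Lemma mem_adm (k l q1 q2 : 'I_n) : (k <= q1)%N -> (q2 <= l)%N ->
  ((k:nat) != q1) || ((q2:nat) != l) -> (q1, q2) \in admissible k l.
Proof.
move=> h1 h2 h3; rewrite inE /= h1 h2 /=.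
by apply/negP => /eqP [e1 e2]; move: h3; rewrite e1 e2 !eqxx.
Qed.

Lemma adm_sub (k l q1 q2 : 'I_n) : (q1, q2) \in admissible k l ->
  admissible q1 q2 \subset admissible k l.
Proof.
rewrite !inE /= => /and3P [h1 h2 h3]; apply/subsetP => [[x y]].
rewrite !inE /= => /and3P [g1 g2 g3].
rewrite (leq_trans h1 g1) (leq_trans g2 h2) /=.
apply/negP => /eqP [ex ey]; subst x y.
move/negP: h3; apply; apply/eqP; congr pair; apply/val_inj => /=; lia.
Qed.

Lemma RS_entry X (k l q1 q2 : 'I_n) : base X -> (q1, q2) \in admissible k l ->
  RS (admissible k l) (X q1 q2).
Proof.
move=> [_ hb] hq; rewrite -(subrK (a q1 q2) (X q1 q2)); apply: RSD.
  exact: RS_mono (adm_sub hq) (hb q1 q2).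
exact: RS_indet.
Qed.

Lemma RS_Drest S d (A : 'M[R]_(d.+2)) :
  (forall u v, (u != ord0) || (v != ord_max) -> RS S (A u v)) -> RS S (Drest A).
Proof.
move=> h; rewrite /Drest; elim/big_ind: _ => //; first exact: RS0.
  by move=> *; apply: RSD.
move=> v _; apply: RSM.
  apply: h; apply/orP; right; by rewrite -val_eqE /= neq_ltn ltn_ord.
rewrite /cofactor; apply: RSM; first by apply: RSX; apply: RSN; apply: RS1.
apply: RS_det => u w; rewrite !mxE; apply: h; apply/orP; left.
by rewrite -val_eqE /=.
Qed.

Definition upd X (r c : nat) (w : R) : 'M[R]_n :=
  \matrix_(k, l) if ((k:nat) == r) && ((l:nat) == c) then a k l + w else X k l.

Lemma upd_base X r c w : base X -> (n < r + c + 2)%N ->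
  (forall k l : 'I_n, k = r :> nat -> l = c :> nat -> RS (admissible k l) w) ->
  base (upd X r c w).
Proof.
move=> [h1 h2] hrc hw; split => k l; rewrite mxE.
  case: ifP => [/andP [/eqP e1 /eqP e2]|_]; last exact: h1.
  lia.
case: ifP => [/andP [/eqP e1 /eqP e2]|_]; last exact: h2.
by rewrite addrC addKr; apply: hw.
Qed.

Lemma upd_blk X r c w x0 r' c' d :
  (forall u v : 'I_d.+1, ~ ((r' + u)%N = r /\ (c' + v)%N = c)) ->
  (r' + d < n)%N -> (c' + d < n)%N ->
  blk (upd X r c w) x0 r' c' d = blk X x0 r' c' d.
Proof.
move=> h hr hc; apply: det_blk_eq => u v; rewrite mxE.
have hu := ltn_ord u; have hv := ltn_ord v.
rewrite !vins; try lia.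
case: ifP => // /andP [/eqP e1 /eqP e2].
by case: (h u v).
Qed.


Lemma step X (i : 'I_n) D : (i + D < n)%N -> base X ->
  (forall D' (i' : 'I_n), (D' < D)%N -> (i' + D' < n)%N -> EQ X i' D') ->
  exists X', [/\ base X', EQ X' i D &
    forall (i' : 'I_n) D', (i' + D' < n)%N -> ((D' < D)%N \/ (D' = D /\ (i' < i)%N)) ->
      blk X' i' (n.-1 - D') i' D' = blk X i' (n.-1 - D') i' D'].
Proof.
move=> hD hb hEQ.
have hi := ltn_ord i.
have pres : forall w (i' : 'I_n) D', (i' + D' < n)%N ->
    ((D' < D)%N \/ (D' = D /\ (i' < i)%N)) ->
    blk (upd X (n.-1 - D) (i + D) w) i' (n.-1 - D') i' D' = blk X i' (n.-1 - D') i' D'.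
  move=> w i' D' h1 h2; apply: upd_blk; try lia.
  move=> u v [e1 e2]; have := ltn_ord u; have := ltn_ord v; lia.
case: D => [|d] in hD hEQ pres *.
  exists (upd X (n.-1 - 0) (i + 0) 0); split; last exact: pres.
    by apply: upd_base => //; [lia | move=> *; apply: RS0].
  rewrite /EQ !det_mx11 !mxE /= !vins; try lia.
  rewrite !eqxx /=.
  have -> : (n.-1 - 0 + 0 + (i + 0) == n.-1 + i)%N = true by apply/eqP; lia.
  by rewrite !addn0 eqxx /= addr0.
set r := (n.-1 - d.+1)%N.
set C := \det (blk X i (n.-1 - d) i d).
set DX := Drest (blk X i r i d.+1).
have hC : C = \det (blk (Y i) i (n.-1 - d) i d) by apply: hEQ; lia.
have sC : (-1) ^+ d.+1 * C != 0.
  by rewrite mulf_neq0 ?signr_eq0 // hC Ynz //; lia.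
exists (upd X r (i + d.+1) (- (DX / ((-1) ^+ d.+1 * C)))); split; last exact: pres.
- apply: upd_base => //; first lia.
  move=> k l ek el; apply: RSN; apply: RSM.
    apply: RS_Drest => u v huv; rewrite mxE; apply: RS_entry => //.
    have hu := ltn_ord u; have hv := ltn_ord v.
    move: huv; rewrite -!val_eqE /= => huv.
    apply: mem_adm; rewrite ?vins; lia.
  apply: RSV; apply: RSM; first by apply: RSX; apply: RSN; apply: RS1.
  apply: RS_det => u v; rewrite mxE; apply: RS_entry => //.
  have hu := ltn_ord u; have hv := ltn_ord v.
  apply: mem_adm; rewrite ?vins; lia.
set w := - (DX / ((-1) ^+ d.+1 * C)).
have hm : blk (upd X r (i + d.+1) w) i (n.-1 - d) i d = blk X i (n.-1 - d) i d.
  apply: upd_blk; try lia.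
rewrite /EQ (expand_top (blk (upd _ _ _ _) _ _ _ _)) (expand_top (blk (Y i) _ _ _ _)).
rewrite !minor_blk.
have -> : r.+1 = (n.-1 - d)%N by rewrite /r; lia.
rewrite DrestY0 // addr0 -/r hm -/C -hC.
have -> : Drest (blk (upd X r (i + d.+1) w) i r i d.+1) = DX.
  apply: Drest_eq => u v huv; rewrite !mxE.
  have hu := ltn_ord u; have hv := ltn_ord v.
  move: huv; rewrite -!val_eqE /= => huv.
  rewrite !vins; try lia.
  have -> : ((r + u == r)%N && (i + v == i + d.+1)%N) = false.
    by apply/negbTE/negP => /andP [/eqP ? /eqP ?]; lia.
  by [].
rewrite !mxE /= !vins; try lia.
rewrite !eqxx /=.
have -> : (r + 0 == r)%N by rewrite addn0.
have -> : (r + 0 + (i + d.+1) == n.-1 + i)%N = true by apply/eqP; rewrite /r; lia.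
by rewrite /= /w mulrDl mulNr divfK // subrK.
Qed.

Lemma base_A : base (indetmx K n).
Proof. by split => k l; rewrite mxE // subrr; apply: RS0. Qed.

Lemma exists_all : exists X, base X /\ forall D (i : 'I_n), (i + D < n)%N -> EQ X i D.
Proof.
suff: forall D, exists X, base X /\
    forall D' (i : 'I_n), (D' < D)%N -> (i + D' < n)%N -> EQ X i D'.
  case/(_ n) => X [hb h]; exists X; split => // D i hD; apply: h => //; lia.
elim => [|D IH]; first by exists (indetmx K n); split; [exact: base_A | by []].
case: IH => X0 [hb0 h0].
suff: forall m, exists X, [/\ base X,
    forall D' (i : 'I_n), (D' < D)%N -> (i + D' < n)%N -> EQ X i D' &
    forall i : 'I_n, (i < m)%N -> (i + D < n)%N -> EQ X i D].
  case/(_ n) => X [hb h1 h2]; exists X; split => // D' i hD' hi.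
  have [lt|eq] : (D' < D)%N \/ D' = D by lia.
    exact: h1.
  by subst D'; apply: h2.
elim => [|m [X [hb h1 h2]]]; first by exists X0; split.
have [hm|hm] := boolP (m + D < n)%N.
  have mn : (m < n)%N by lia.
  pose im : 'I_n := Ordinal mn.
  have [X' [hb' heq hpres]] := step (i:=im) hm hb h1.
  exists X'; split => //.
    move=> D' i hD' hi; rewrite /EQ hpres //; [exact: h1 | by left].
  move=> i hi hiD.
  have [lt|eq] : (i < m)%N \/ i = im.
    have : (i < m)%N \/ (i = m :> nat) by lia.
    by case=> [?|e]; [left | right; apply: val_inj].
    rewrite /EQ hpres //; [exact: h2 | by right].
  by subst i.
exists X; split => // i hi hiD; apply: h2 => //; lia.
Qed.

Lemma uniq_all (B1 B2 : 'M[R]_n) :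
  (forall k l : 'I_n, (k + l + 2 <= n)%N -> B1 k l = a k l) ->
  (forall k l : 'I_n, (k + l + 2 <= n)%N -> B2 k l = a k l) ->
  (forall D (i : 'I_n), (i + D < n)%N -> EQ B1 i D) ->
  (forall D (i : 'I_n), (i + D < n)%N -> EQ B2 i D) -> B1 = B2.
Proof.
move=> f1 f2 e1 e2.
suff H : forall D (k l : 'I_n), (n.-1 - k < D)%N -> B1 k l = B2 k l.
  apply/matrixP => k l; apply: (H n); have := ltn_ord k; lia.
elim => [|D IH] k l hk; first lia.
have [lt|eq] : (n.-1 - k < D)%N \/ (n.-1 - k = D)%N by lia.
  exact: IH.
have hkn := ltn_ord k.
suff H2 : forall m (l : 'I_n), (l < m)%N -> B1 k l = B2 k l by apply: (H2 n).
elim => [|m IHm] {}l hl; first lia.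
have [lt|eq'] : (l < m)%N \/ (l = m :> nat) by lia.
  exact: IHm.
have hln := ltn_ord l.
have [fx|nfx] := boolP (k + l + 2 <= n)%N.
  by rewrite f1 // f2.
destruct D as [|d].
  have hiD : (l + 0 < n)%N by lia.
  have := e1 0%N l hiD; have := e2 0%N l hiD.
  rewrite /EQ !det_mx11 !mxE /=.
  have -> : insubd l (n.-1 - 0 + 0)%N = k by apply/val_inj; rewrite /= vins /=; lia.
  have -> : insubd l (l + 0)%N = l by apply/val_inj; rewrite /= vins /=; lia.
  by move=> -> ->.
have hlD : (l - d.+1 < n)%N by lia.
pose i : 'I_n := Ordinal hlD.
have iv : (i : nat) = (l - d.+1)%N by [].
have hiD : (i + d.+1 < n)%N by lia.
have E1 := e1 _ _ hiD; have E2 := e2 _ _ hiD.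
rewrite /EQ !expand_top !minor_blk in E1 E2.
have e : (n.-1 - d.+1).+1 = (n.-1 - d)%N by lia.
rewrite e in E1 E2.
have hmin : blk B1 i (n.-1 - d) i d = blk B2 i (n.-1 - d) i d.
  apply: det_blk_eq => u v; have := ltn_ord u; have := ltn_ord v => hv hu.
  apply: IH; rewrite vins; lia.
have hDr : Drest (blk B1 i (n.-1 - d.+1) i d.+1) = Drest (blk B2 i (n.-1 - d.+1) i d.+1).
  apply: Drest_eq => u v huv; rewrite !mxE.
  have hu := ltn_ord u; have hv := ltn_ord v.
  move: huv; rewrite -!val_eqE /= => huv.
  have [u0|un0] : (u = 0 :> nat) \/ (0 < u)%N by lia.
    have -> : insubd i (n.-1 - d.+1 + u)%N = k by apply/val_inj; rewrite /= vins /=; lia.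
    apply: IHm; rewrite vins; lia.
  apply: IH; rewrite vins; lia.
have top : forall X : 'M[R]_n, blk X i (n.-1 - d.+1) i d.+1 ord0 ord_max = X k l.
  move=> X; rewrite mxE; congr (X _ _); apply/val_inj; rewrite /= vins /=; lia.
have hC : \det (blk B1 i (n.-1 - d) i d) = \det (blk (Y i) i (n.-1 - d) i d).
  by apply: e1; lia.
have sC : (-1) ^+ d.+1 * \det (blk B1 i (n.-1 - d) i d) != 0.
  by rewrite mulf_neq0 ?signr_eq0 // hC Ynz //; lia.
rewrite !top hmin hDr in E1 E2.
rewrite hmin in sC; move: E1; rewrite -E2 => /addIr; exact: mulIf.
Qed.

End Main.

Unset Implicit Arguments.

Theorem lemma4p4 (K : fieldType) (n : nat) :
  exists! B : 'M[ratfun K n]_n,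
    [/\ (* 1. r_{i,j} = 0 if i + j <= n (paper, 1-based) *)
        (forall i j : 'I_n, (i + j + 2 <= n)%N -> B i j = indet K i j),
        (* 2. r_{i,j} is a rational function of the a_{k,l},
              k >= i, l <= j, (k,l) <> (i,j) *)
        (forall i j : 'I_n,
           ratfun_in_vars (admissible i j) (B i j - indet K i j))
      & (* 3. bottom square block determinants *)
        (forall i j : 'I_n, (i <= j)%N ->
           \det (bottom_block B i j) = \det (antidiag_block K i j))].
Proof.
have [X [[hb1 hb2] hEQ]] := exists_all K n.
exists X; split.
  split => // i j ij; rewrite antidiag_blk //.
  have := hEQ (j - i)%N i; rewrite /EQ; apply; have := ltn_ord j; lia.
move=> B [f1 f2 f3]; apply: (uniq_all hb1 f1).
  by move=> D i hD; apply: hEQ.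
move=> D i hD.
pose j : 'I_n := Ordinal hD.
have := f3 i j (leq_addr _ _); rewrite antidiag_blk; last exact: leq_addr.
move=> h; have h' : EQ B i (j - i) := h.
by move: h'; have -> : (j - i = D)%N by rewrite /= addKn.
Qed.
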